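(* Every sequent provable in the calculus $\mathsf{G4iSLt}+(\mathrm{cut})$ is provable in $\mathsf{G4iSLt}$; i.e. the additive cut rule is eliminable from $\mathsf{G4iSLt}+(\mathrm{cut})$.
   Context: Formulas are built by the grammar $\varphi ::= p \mid \bot \mid \varphi\land\varphi \mid \varphi\lor\varphi \mid \varphi\to\varphi \mid \Box\varphi$, with $p$ ranging over a countably infinite set of propositional variables. For a multiset $\Gamma$, $\Box\Gamma=\{\Box\psi:\psi\in\Gamma\}$; a boxed formula is one of the form $\Box\psi$. A sequent is $\Gamma\Rightarrow\chi$ with $\Gamma$ a finite multiset of formulas and $\chi$ a formula. The sequent calculus $\mathsf{G4iSLt}$ has the following rules, where $p$ is a propositional variable and $\Phi$ always denotes a multiset containing no boxed formula: (⊥L) $\bot,\Gamma\Rightarrow\chi$ (no premise); (IdP) $\Gamma,p\Rightarrow p$ (no premise); (∧L) from $\Gamma,\varphi,\psi\Rightarrow\chi$ infer $\Gamma,\varphi\land\psi\Rightarrow\chi$; (∧R) from $\Gamma\Rightarrow\varphi$ and $\Gamma\Rightarrow\psi$ infer $\Gamma\Rightarrow\varphi\land\psi$; (∨L) from $\Gamma,\varphi\Rightarrow\chi$ and $\Gamma,\psi\Rightarrow\chi$ infer $\Gamma,\varphi\lor\psi\Rightarrow\chi$; (∨R$_i$), $i\in\{1,2\}$: from $\Gamma\Rightarrow\varphi_i$ infer $\Gamma\Rightarrow\varphi_1\lor\varphi_2$; (p→L) from $\Gamma,p,\varphi\Rightarrow\chi$ infer $\Gamma,p,p\to\varphi\Rightarrow\chi$;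 (→R) from $\Gamma,\varphi\Rightarrow\psi$ infer $\Gamma\Rightarrow\varphi\to\psi$; (□→L) from $\Phi,\Gamma,\psi,\Box\varphi\Rightarrow\varphi$ and $\Phi,\Box\Gamma,\psi\Rightarrow\chi$ infer $\Phi,\Box\Gamma,\Box\varphi\to\psi\Rightarrow\chi$; (SLtR) from $\Phi,\Gamma,\Box\varphi\Rightarrow\varphi$ infer $\Phi,\Box\Gamma\Rightarrow\Box\varphi$; (∧→L) from $\Gamma,\varphi\to(\psi\to\chi)\Rightarrow\delta$ infer $\Gamma,(\varphi\land\psi)\to\chi\Rightarrow\delta$; (∨→L) from $\Gamma,\varphi\to\chi,\psi\to\chi\Rightarrow\delta$ infer $\Gamma,(\varphi\lor\psi)\to\chi\Rightarrow\delta$; (→→L) from $\Gamma,\psi\to\chi\Rightarrow\varphi\to\psi$ and $\Gamma,\chi\Rightarrow\delta$ infer $\Gamma,(\varphi\to\psi)\to\chi\Rightarrow\delta$. A proof of a sequent $S$ is a finite tree of sequents with root $S$ in which each interior node together with its children forms an instance of a rule (conclusion, premises) and each leaf is the conclusion of a premise-free rule; $S$ is provable if it has a proof. The calculus $\mathsf{G4iSLt}+(\mathrm{cut})$ consists of all rules of $\mathsf{G4iSLt}$ together with the additive cut rule: from $\Gamma\Rightarrow\varphi$ and $\varphi,\Gamma\Rightarrow\chi$ infer $\Gamma\Rightarrow\chi$ (for arbitrary finite multiset $\Gamma$ and formulas $\varphi,\chi$). *)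

(* Defs.v *)
From Stdlib Require Import List Permutation.
Import ListNotations.

Inductive form : Type :=
| Var : nat -> form
| Bot : form
| And : form -> form -> form
| Or : form -> form -> form
| Imp : form -> form -> form
| Box : form -> form.

Definition is_boxed (A : form) : Prop :=
  match A with Box _ => True | _ => False end.

Definition unboxed (Phi : list form) : Prop := forall A, In A Phi -> ~ is_boxed A.

Definition boxes (G : list form) : list form := map Box G.

(* Multisets are represented by lists; the conclusion context of every rule
   is taken up to permutation (multiset equality). The boolean [cut]
   selects whether the additive cut rule is available. *)
Inductive prv (cut : bool) : list form -> form -> Prop :=
| BotL : forall G D chi, Permutation D (Bot :: G) -> prv cut D chi
| IdP : forall G D p, Permutation D (Var p :: G) -> prv cut D (Var p)
| AndL : forall G D a b chi, Permutation D (And a b :: G) ->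
    prv cut (a :: b :: G) chi -> prv cut D chi
| AndR : forall G a b, prv cut G a -> prv cut G b -> prv cut G (And a b)
| OrL : forall G D a b chi, Permutation D (Or a b :: G) ->
    prv cut (a :: G) chi -> prv cut (b :: G) chi -> prv cut D chi
| OrR1 : forall G a b, prv cut G a -> prv cut G (Or a b)
| OrR2 : forall G a b, prv cut G b -> prv cut G (Or a b)
| PImpL : forall G D p a chi, Permutation D (Var p :: Imp (Var p) a :: G) ->
    prv cut (Var p :: a :: G) chi -> prv cut D chi
| ImpR : forall G a b, prv cut (a :: G) b -> prv cut G (Imp a b)
| BoxImpL : forall Phi G D a b chi, unboxed Phi ->
    Permutation D (Imp (Box a) b :: Phi ++ boxes G) ->
    prv cut (Box a :: b :: Phi ++ G) a ->
    prv cut (b :: Phi ++ boxes G) chi -> prv cut D chi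
| SLtR : forall Phi G D a, unboxed Phi ->
    Permutation D (Phi ++ boxes G) ->
    prv cut (Box a :: Phi ++ G) a -> prv cut D (Box a)
| AndImpL : forall G D a b c d, Permutation D (Imp (And a b) c :: G) ->
    prv cut (Imp a (Imp b c) :: G) d -> prv cut D d
| OrImpL : forall G D a b c d, Permutation D (Imp (Or a b) c :: G) ->
    prv cut (Imp a c :: Imp b c :: G) d -> prv cut D d
| ImpImpL : forall G D a b c d, Permutation D (Imp (Imp a b) c :: G) ->
    prv cut (Imp b c :: G) (Imp a b) -> prv cut (c :: G) d -> prv cut D d
| Cut : forall G a chi, cut = true ->
    prv cut G a -> prv cut (a :: G) chi -> prv cut G chi.

Definition G4iSLt_prv (G : list form) (chi : form) : Prop := prv false G chi.
Definition G4iSLt_cut_prv (G : list form) (chi : form) : Prop := prv true G chi.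

(* Main.v *)
Require Import Defs.
From Stdlib Require Import List Permutation Arith Lia PeanoNat.
Import ListNotations.

Definition form_eq_dec : forall x y : form, {x = y} + {x <> y}.
Proof. decide equality; apply Nat.eq_dec. Qed.

Ltac psolve :=
  apply (Permutation_count_occ form_eq_dec); let x0 := fresh "x" in intro x0;
  repeat match goal with
  | H : Permutation _ _ |- _ =>
      let H' := fresh "Hc" in
      pose proof (proj1 (Permutation_count_occ form_eq_dec _ _) H x0) as H';
      clear H
  end;
  repeat rewrite ?count_occ_app, ?map_app in *; simpl in *;
  repeat rewrite ?count_occ_app in *;
  repeat match goal with
  | |- context [form_eq_dec ?a ?b] => destruct (form_eq_dec a b)
  | H : context [form_eq_dec ?a ?b] |- _ => destruct (form_eq_dec a b)
  end; first [lia | congruence].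

Lemma test a b c (K L : list form) : Permutation L (a :: K) -> Permutation (b :: c :: L) (c :: a :: b :: K).
Proof. intros. psolve. Qed.

Lemma prv_perm : forall c D chi, prv c D chi -> forall D', Permutation D D' -> prv c D' chi.
Proof.
  induction 1; intros D' HP.
  - eapply BotL. rewrite <- HP; eassumption.
  - eapply IdP. rewrite <- HP; eassumption.
  - eapply AndL; [rewrite <- HP; eassumption| eauto].
  - apply AndR; eauto.
  - eapply OrL; [rewrite <- HP; eassumption| eauto | eauto].
  - apply OrR1; eauto.
  - apply OrR2; eauto.
  - eapply PImpL; [rewrite <- HP; eassumption| eauto].
  - apply ImpR; eauto.
  - eapply BoxImpL; [eassumption | rewrite <- HP; eassumption | eauto | eauto].
  - eapply SLtR; [eassumption | rewrite <- HP; eassumption | eauto].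
  - eapply AndImpL; [rewrite <- HP; eassumption| eauto].
  - eapply OrImpL; [rewrite <- HP; eassumption| eauto].
  - eapply ImpImpL; [rewrite <- HP; eassumption| eauto | eauto].
  - eapply Cut; eauto.
Qed.

Definition unb (A : form) : form := match A with Box a => a | _ => A end.

Lemma unboxed_map : forall Phi, unboxed Phi -> map unb Phi = Phi.
Proof.
  induction Phi as [|A Phi IH]; intros H; simpl; auto.
  rewrite IH. 2:{ intros B HB; apply H; simpl; auto. }
  destruct A; simpl; auto. exfalso; apply (H (Box A)); simpl; auto.
Qed.

Lemma map_unb_boxes : forall G, map unb (boxes G) = G.
Proof. induction G; simpl; congruence. Qed.

Lemma sltr_canon : forall D Phi G, Permutation D (Phi ++ boxes G) -> unboxed Phi ->
  Permutation (map unb D) (Phi ++ G).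
Proof.
  intros D Phi G HP HU. apply (Permutation_map unb) in HP.
  rewrite map_app, (unboxed_map _ HU), map_unb_boxes in HP; exact HP.
Qed.

Lemma decomp : forall D, exists Phi G, unboxed Phi /\ Permutation D (Phi ++ boxes G).
Proof.
  induction D as [|A D IH].
  - exists [], []. split; simpl; auto. intros B [].
  - destruct IH as (Phi & G & HU & HP). destruct A eqn:EA.
    6: { exists Phi, (f :: G). split; auto. simpl. rewrite HP. apply Permutation_middle. }
    all: (exists (A :: Phi), G; split; [intros B [HB|HB]; [subst; simpl; auto | apply HU; auto] | subst; simpl; auto]).
Qed.

Lemma SLtR' : forall c D a, prv c (Box a :: map unb D) a -> prv c D (Box a).
Proof.
  intros c D a H. destruct (decomp D) as (Phi & G & HU & HP).
  eapply SLtR; eauto. eapply prv_perm; eauto.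
  apply perm_skip. eapply sltr_canon; eauto.
Qed.

Lemma BoxImpL' : forall c H a b chi, prv c (Box a :: b :: map unb H) a -> prv c (b :: H) chi ->
  prv c (Imp (Box a) b :: H) chi.
Proof.
  intros c H a b chi H1 H2. destruct (decomp H) as (Phi & G & HU & HP).
  eapply BoxImpL; eauto.
  - eapply prv_perm; eauto. do 2 apply perm_skip. eapply sltr_canon; eauto.
  - eapply prv_perm; eauto.
Qed.

Lemma perm_split : forall (X Y : form) (G H : list form), Permutation (X::G) (Y::H) ->
  (X = Y /\ Permutation G H) \/ (X <> Y /\ exists K, Permutation G (Y::K) /\ Permutation H (X::K)).
Proof.
  intros X Y G H HP. destruct (form_eq_dec X Y) as [<-|Hne].
  - left; split; auto. eapply Permutation_cons_inv; eauto.
  - right; split; auto.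
    assert (In Y G) as HY.
    { assert (In Y (X::G)) by (rewrite HP; simpl; auto). destruct H0; [congruence|auto]. }
    apply in_split in HY as (G1 & G2 & ->). exists (G1 ++ G2). split.
    + symmetry; apply Permutation_middle.
    + apply (Permutation_cons_inv (a:=Y)). rewrite <- HP.
      rewrite <- Permutation_middle. apply perm_swap.
Qed.

Lemma np1 : forall D (X Y : form) G0 G, Permutation D (X :: G0) -> Permutation D (Y :: G) -> X <> Y ->
  exists K, Permutation G (X :: K) /\ Permutation G0 (Y :: K).
Proof.
  intros D X Y G0 G H1 H2 Hne.
  assert (Permutation (Y :: G) (X :: G0)) as H3 by (rewrite <- H1; symmetry; auto).
  destruct (perm_split _ _ _ _ H3) as [[E _]|[_ (K & HK1 & HK2)]]; [congruence|].
  exists K; auto.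
Qed.

Lemma np2 : forall D (X Z Y : form) G0 G, Permutation D (X :: Z :: G0) -> Permutation D (Y :: G) -> X <> Y -> Z <> Y ->
  exists K, Permutation G (X :: Z :: K) /\ Permutation G0 (Y :: K).
Proof.
  intros D X Z Y G0 G H1 H2 Hne1 Hne2.
  destruct (np1 _ _ _ _ _ H1 H2 Hne1) as (K1 & HK1 & HK2).
  destruct (np1 _ _ _ _ _ HK2 (Permutation_refl _) (fun E => Hne2 (eq_sym E))) as (K & HK3 & HK4).
  exists K. split; [rewrite HK1, HK4; auto| auto].
Qed.

Lemma box_or_unb : forall g, (exists h, g = Box h) \/ unb g = g.
Proof. destruct g; simpl; eauto. Qed.

Lemma map_unb_pg : forall Phi G, unboxed Phi -> map unb (Phi ++ boxes G) = Phi ++ G.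
Proof. intros. rewrite map_app, unboxed_map, map_unb_boxes; auto. Qed.

Lemma weak : forall c D chi, prv c D chi -> forall A, prv c (A :: D) chi.
Proof.
  induction 1; intro A0.
  - eapply BotL with (G := A0 :: G). psolve.
  - eapply IdP with (G := A0 :: G). psolve.
  - eapply AndL with (G := A0 :: G) (a:=a) (b:=b). psolve. eapply prv_perm; [apply (IHprv A0)|]. psolve.
  - apply AndR; auto.
  - eapply OrL with (G := A0 :: G) (a:=a) (b:=b). psolve.
    eapply prv_perm; [apply (IHprv1 A0)|]. psolve. eapply prv_perm; [apply (IHprv2 A0)|]. psolve.
  - apply OrR1; auto.
  - apply OrR2; auto.
  - eapply PImpL with (G := A0 :: G) (p:=p) (a:=a). psolve. eapply prv_perm; [apply (IHprv A0)|]. psolve.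
  - apply ImpR. eapply prv_perm; [apply (IHprv A0)|]. psolve.
  - eapply prv_perm with (D := Imp (Box a) b :: A0 :: Phi ++ boxes G).
    2:{ psolve. }
    apply BoxImpL'.
    + simpl. rewrite map_unb_pg; auto. eapply prv_perm; [apply (IHprv1 (unb A0))|]. psolve.
    + eapply prv_perm; [apply (IHprv2 A0)|]. psolve.
  - apply SLtR'. simpl. eapply prv_perm; [apply (IHprv (unb A0))|].
    apply (sltr_canon _ _ _ H0) in H. psolve.
  - eapply AndImpL with (G := A0 :: G) (a:=a) (b:=b) (c:=c0). psolve. eapply prv_perm; [apply (IHprv A0)|]. psolve.
  - eapply OrImpL with (G := A0 :: G) (a:=a) (b:=b) (c:=c0). psolve. eapply prv_perm; [apply (IHprv A0)|]. psolve.
  - eapply ImpImpL with (G := A0 :: G) (a:=a) (b:=b) (c:=c0). psolve.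
    eapply prv_perm; [apply (IHprv1 A0)|]. psolve. eapply prv_perm; [apply (IHprv2 A0)|]. psolve.
  - eapply Cut; eauto. eapply prv_perm; [apply (IHprv2 A0)|]. psolve.
Qed.

Lemma weak_app : forall c L D chi, prv c D chi -> prv c (L ++ D) chi.
Proof. induction L; simpl; intros; auto. apply weak; auto. Qed.

Ltac npc H HP := 
  let K := fresh "K" in let HK1 := fresh "HK" in let HK2 := fresh "HK" in
  destruct (np1 _ _ _ _ _ H HP ltac:(discriminate)) as (K & HK1 & HK2).

Lemma unbox : forall c D chi, prv c D chi -> forall g G, Permutation D (Box g :: G) -> prv c (g :: G) chi.
Proof.
  induction 1; intros g0 G0 HP.
  - npc H HP. eapply BotL with (G := g0 :: K). psolve.
  - npc H HP. eapply IdP with (G := g0 :: K). psolve.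
  - npc H HP. eapply AndL with (G := g0 :: K) (a:=a) (b:=b). psolve.
    eapply prv_perm; [apply (IHprv g0 (a::b::K))|]; psolve.
  - apply AndR; eauto.
  - npc H HP. eapply OrL with (G := g0 :: K) (a:=a) (b:=b). psolve.
    eapply prv_perm; [apply (IHprv1 g0 (a::K))|]; psolve.
    eapply prv_perm; [apply (IHprv2 g0 (b::K))|]; psolve.
  - apply OrR1; eauto.
  - apply OrR2; eauto.
  - destruct (np2 _ _ _ _ _ _ H HP ltac:(discriminate) ltac:(discriminate)) as (K & HK1 & HK2).
    eapply PImpL with (G := g0 :: K) (p:=p) (a:=a). psolve.
    eapply prv_perm; [apply (IHprv g0 (Var p :: a::K))|]; psolve.
  - apply ImpR. eapply prv_perm; [apply (IHprv g0 (a::G0))|]; psolve.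
  - npc H0 HP.
    assert (Hm : Permutation (Phi ++ G) (g0 :: map unb K)).
    { rewrite <- (map_unb_pg _ _ H). apply (Permutation_map unb) in HK0. exact HK0. }
    eapply prv_perm with (D := Imp (Box a) b :: g0 :: K). 2:{ psolve. }
    apply BoxImpL'.
    + simpl. destruct (box_or_unb g0) as [(h & ->)|E].
      * simpl. eapply prv_perm; [apply (IHprv1 h (Box a :: b :: map unb K))|]; psolve.
      * rewrite E. eapply prv_perm; [exact H1|]. psolve.
    + eapply prv_perm; [apply (IHprv2 g0 (b::K))|]; psolve.
  - apply SLtR'.
    assert (Hm : Permutation (Phi ++ G) (g0 :: map unb G0)).
    { rewrite <- (map_unb_pg _ _ H). apply (Permutation_map unb) in HP.
      apply (Permutation_map unb) in H0. rewrite <- H0. exact HP. }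
    simpl. destruct (box_or_unb g0) as [(h & ->)|E].
    + simpl. eapply prv_perm; [apply (IHprv h (Box a :: map unb G0))|]; psolve.
    + rewrite E. eapply prv_perm; [exact H1|]. psolve.
  - npc H HP. eapply AndImpL with (G := g0 :: K) (a:=a) (b:=b) (c:=c0). psolve.
    eapply prv_perm; [apply (IHprv g0 (Imp a (Imp b c0)::K))|]; psolve.
  - npc H HP. eapply OrImpL with (G := g0 :: K) (a:=a) (b:=b) (c:=c0). psolve.
    eapply prv_perm; [apply (IHprv g0 (Imp a c0 :: Imp b c0::K))|]; psolve.
  - npc H HP. eapply ImpImpL with (G := g0 :: K) (a:=a) (b:=b) (c:=c0). psolve.
    eapply prv_perm; [apply (IHprv1 g0 (Imp b c0::K))|]; psolve.
    eapply prv_perm; [apply (IHprv2 g0 (c0::K))|]; psolve.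
  - eapply Cut; eauto. eapply prv_perm; [apply (IHprv2 g0 (a::G0))|]; psolve.
Qed.

Lemma unbox_list : forall c L1 L2 chi, prv c (L1 ++ L2) chi -> prv c (map unb L1 ++ L2) chi.
Proof.
  induction L1 as [|A L1 IH]; intros L2 chi H; simpl in *; auto.
  destruct (box_or_unb A) as [(h & ->)|E].
  - simpl. apply unbox with (g := h) (G := map unb L1 ++ L2) (D := Box h :: map unb L1 ++ L2); auto.
    eapply prv_perm with (D := map unb L1 ++ Box h :: L2).
    + apply IH. eapply prv_perm; [exact H|]. apply Permutation_middle.
    + symmetry; apply Permutation_middle.
  - rewrite E. eapply prv_perm with (D := map unb L1 ++ A :: L2).
    + apply IH. eapply prv_perm; [exact H|]. apply Permutation_middle.
    + symmetry; apply Permutation_middle.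
Qed.

Lemma unbox_mid : forall c L1 L2 chi, prv c (L1 ++ L2) chi -> prv c (L1 ++ map unb L2) chi.
Proof.
  intros. eapply prv_perm; [apply unbox_list|apply Permutation_app_comm].
  eapply prv_perm; [exact H|apply Permutation_app_comm].
Qed.

Lemma unb_nb : forall X, ~ is_boxed X -> unb X = X.
Proof. destruct X; simpl; auto. intros H; exfalso; apply H; simpl; auto. Qed.

Lemma perm_head_eq : forall (X : form) G G0 D, Permutation D (X :: G0) -> Permutation D (X :: G) -> Permutation G G0.
Proof. intros. eapply Permutation_cons_inv. rewrite <- H0, H. auto. Qed.

Lemma repl_gen : forall (c : bool) (X : form) (X' : list form), ~ is_boxed X -> (forall p, X <> Var p) -> X <> Bot ->
 (forall a b H chi, X = And a b -> prv c (a::b::H) chi -> prv c (X' ++ H) chi) ->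
 (forall a b H chi, X = Or a b -> prv c (a::H) chi -> prv c (b::H) chi -> prv c (X'++H) chi) ->
 (forall p a H chi, X = Imp (Var p) a -> prv c (Var p :: a :: H) chi -> prv c (X' ++ Var p :: H) chi) ->
 (forall a b H chi, X = Imp (Box a) b -> prv c (Box a :: b :: map unb H) a -> prv c (b::H) chi -> prv c (X' ++ H) chi) ->
 (forall a b d H chi, X = Imp (And a b) d -> prv c (Imp a (Imp b d) :: H) chi -> prv c (X' ++ H) chi) ->
 (forall a b d H chi, X = Imp (Or a b) d -> prv c (Imp a d :: Imp b d :: H) chi -> prv c (X' ++ H) chi) ->
 (forall a b d H chi, X = Imp (Imp a b) d -> prv c (Imp b d :: H) (Imp a b) -> prv c (d :: H) chi -> prv c (X' ++ H) chi) ->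
 forall D chi, prv c D chi -> forall G, Permutation D (X :: G) -> prv c (X' ++ G) chi.
Proof.
  intros c0 X X' hX hV hB hAndL hOrL hPImpL hBoxImpL hAndImpL hOrImpL hImpImpL.
  induction 1; intros G0 HP.
  - assert (Hne : Bot <> X) by (intro E; apply hB; auto).
    destruct (np1 _ _ _ _ _ H HP Hne) as (K & HK1 & HK2).
    eapply BotL with (G := X' ++ K). psolve.
  - assert (Hne : Var p <> X) by (intro E; apply (hV p); auto).
    destruct (np1 _ _ _ _ _ H HP Hne) as (K & HK1 & HK2).
    eapply IdP with (G := X' ++ K). psolve.
  - destruct (form_eq_dec (And a b) X) as [E|Hne].
    + subst X. eapply hAndL; eauto. eapply prv_perm; [exact H0|]. 
      pose proof (perm_head_eq _ _ _ _ H HP). psolve.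
    + destruct (np1 _ _ _ _ _ H HP Hne) as (K & HK1 & HK2).
      eapply AndL with (G := X' ++ K) (a:=a) (b:=b). psolve.
      eapply prv_perm; [apply (IHprv (a::b::K))|]; psolve.
  - apply AndR; eauto.
  - destruct (form_eq_dec (Or a b) X) as [E|Hne].
    + subst X. pose proof (perm_head_eq _ _ _ _ H HP).
      eapply hOrL; [reflexivity| eapply prv_perm; [exact H0|]; psolve | eapply prv_perm; [exact H1|]; psolve].
    + destruct (np1 _ _ _ _ _ H HP Hne) as (K & HK1 & HK2).
      eapply OrL with (G := X' ++ K) (a:=a) (b:=b). psolve.
      eapply prv_perm; [apply (IHprv1 (a::K))|]; psolve.
      eapply prv_perm; [apply (IHprv2 (b::K))|]; psolve.
  - apply OrR1; eauto.
  - apply OrR2; eauto.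
  - assert (Hne1 : Var p <> X) by (intro E; apply (hV p); auto).
    destruct (form_eq_dec (Imp (Var p) a) X) as [E|Hne].
    + subst X.
      assert (Permutation G0 (Var p :: G)).
      { eapply Permutation_cons_inv. rewrite <- HP, H. apply perm_swap. }
      eapply prv_perm; [eapply hPImpL; eauto|]. psolve.
    + destruct (np2 _ _ _ _ _ _ H HP Hne1 Hne) as (K & HK1 & HK2).
      eapply PImpL with (G := X' ++ K) (p:=p) (a:=a). psolve.
      eapply prv_perm; [apply (IHprv (Var p :: a::K))|]; psolve.
  - apply ImpR. eapply prv_perm; [apply (IHprv (a::G0))|]; psolve.
  - destruct (form_eq_dec (Imp (Box a) b) X) as [E|Hne].
    + subst X. pose proof (perm_head_eq _ _ _ _ H0 HP) as HG.
      eapply hBoxImpL; eauto.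
      * eapply prv_perm; [exact H1|]. apply (Permutation_map unb) in HG.
        rewrite (map_unb_pg _ _ H) in HG. psolve.
      * eapply prv_perm; [exact H2|]. psolve.
    + destruct (np1 _ _ _ _ _ H0 HP Hne) as (K & HK1 & HK2).
      assert (Hm : Permutation (Phi ++ G) (X :: map unb K)).
      { rewrite <- (map_unb_pg _ _ H). apply (Permutation_map unb) in HK2.
        rewrite HK2. simpl. rewrite unb_nb; auto. }
      eapply prv_perm with (D := Imp (Box a) b :: X' ++ K). 2:{ psolve. }
      apply BoxImpL'.
      * rewrite map_app. 
        eapply prv_perm with (D := map unb X' ++ Box a :: b :: map unb K). 2:{ psolve. }
        apply unbox_list. apply (IHprv1 (Box a :: b :: map unb K)). psolve.
      * eapply prv_perm; [apply (IHprv2 (b::K))|]; psolve.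
  - apply SLtR'.
    assert (Hm : Permutation (Phi ++ G) (X :: map unb G0)).
    { rewrite <- (map_unb_pg _ _ H). apply (Permutation_map unb) in HP.
      apply (Permutation_map unb) in H0. rewrite <- H0, HP. simpl. rewrite unb_nb; auto. }
    rewrite map_app.
    eapply prv_perm with (D := map unb X' ++ Box a :: map unb G0). 2:{ psolve. }
    apply unbox_list. apply (IHprv (Box a :: map unb G0)). psolve.
  - destruct (form_eq_dec (Imp (And a b) c) X) as [E|Hne].
    + subst X. pose proof (perm_head_eq _ _ _ _ H HP).
      eapply hAndImpL; [reflexivity| eapply prv_perm; [exact H0|]; psolve].
    + destruct (np1 _ _ _ _ _ H HP Hne) as (K & HK1 & HK2).
      eapply AndImpL with (G := X' ++ K) (a:=a) (b:=b) (c:=c). psolve.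
      eapply prv_perm; [apply (IHprv (Imp a (Imp b c)::K))|]; psolve.
  - destruct (form_eq_dec (Imp (Or a b) c) X) as [E|Hne].
    + subst X. pose proof (perm_head_eq _ _ _ _ H HP).
      eapply hOrImpL; [reflexivity| eapply prv_perm; [exact H0|]; psolve].
    + destruct (np1 _ _ _ _ _ H HP Hne) as (K & HK1 & HK2).
      eapply OrImpL with (G := X' ++ K) (a:=a) (b:=b) (c:=c). psolve.
      eapply prv_perm; [apply (IHprv (Imp a c :: Imp b c::K))|]; psolve.
  - destruct (form_eq_dec (Imp (Imp a b) c) X) as [E|Hne].
    + subst X. pose proof (perm_head_eq _ _ _ _ H HP).
      eapply hImpImpL; [reflexivity| eapply prv_perm; [exact H0|]; psolve | eapply prv_perm; [exact H1|]; psolve].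
    + destruct (np1 _ _ _ _ _ H HP Hne) as (K & HK1 & HK2).
      eapply ImpImpL with (G := X' ++ K) (a:=a) (b:=b) (c:=c). psolve.
      eapply prv_perm; [apply (IHprv1 (Imp b c::K))|]; psolve.
      eapply prv_perm; [apply (IHprv2 (c::K))|]; psolve.
  - eapply Cut; eauto. eapply prv_perm; [apply (IHprv2 (a::G0))|]; psolve.
Qed.

Ltac rg X X' := 
  let H := fresh in intro H;
  apply (repl_gen false X X'); [ simpl; auto | intros ? ?; discriminate | discriminate | .. ].

Lemma andL_inv : forall a b G chi, prv false (And a b :: G) chi -> prv false (a :: b :: G) chi.
Proof.
  intros a b G chi H.
  apply (repl_gen false (And a b) [a; b]) with (D := And a b :: G); auto;
    try (intros; discriminate); try (intros ? ?; discriminate).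
  intros a' b' H' chi' E Hp. injection E as -> ->. exact Hp.
Qed.

Lemma orL_inv1 : forall a b G chi, prv false (Or a b :: G) chi -> prv false (a :: G) chi.
Proof.
  intros a b G chi H.
  apply (repl_gen false (Or a b) [a]) with (D := Or a b :: G); auto;
    try (intros; discriminate); try (intros ? ?; discriminate).
  intros a' b' H' chi' E Hp1 Hp2. injection E as -> ->. exact Hp1.
Qed.

Lemma orL_inv2 : forall a b G chi, prv false (Or a b :: G) chi -> prv false (b :: G) chi.
Proof.
  intros a b G chi H.
  apply (repl_gen false (Or a b) [b]) with (D := Or a b :: G); auto;
    try (intros; discriminate); try (intros ? ?; discriminate).
  intros a' b' H' chi' E Hp1 Hp2. injection E as -> ->. exact Hp2.
Qed.

Lemma andImpL_inv : forall a b c G chi, prv false (Imp (And a b) c :: G) chi -> prv false (Imp a (Imp b c) :: G) chi.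
Proof.
  intros a b c G chi H.
  apply (repl_gen false (Imp (And a b) c) [Imp a (Imp b c)]) with (D := Imp (And a b) c :: G); auto;
    try (intros; discriminate); try (intros ? ?; discriminate).
  intros a' b' d' H' chi' E Hp. injection E as -> -> ->. exact Hp.
Qed.

Lemma orImpL_inv : forall a b c G chi, prv false (Imp (Or a b) c :: G) chi -> prv false (Imp a c :: Imp b c :: G) chi.
Proof.
  intros a b c G chi H.
  apply (repl_gen false (Imp (Or a b) c) [Imp a c; Imp b c]) with (D := Imp (Or a b) c :: G); auto;
    try (intros; discriminate); try (intros ? ?; discriminate).
  intros a' b' d' H' chi' E Hp. injection E as -> -> ->. exact Hp.
Qed.

Lemma impweak_r : forall x e G chi, (forall a b, x <> And a b) -> (forall a b, x <> Or a b) ->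
  prv false (Imp x e :: G) chi -> prv false (e :: G) chi.
Proof.
  intros x e G chi HA HO H.
  apply (repl_gen false (Imp x e) [e]) with (D := Imp x e :: G); auto;
    try (intros; discriminate); try (intros ? ?; discriminate).
  - intros p a H' chi' E Hp. injection E as -> ->. eapply prv_perm; [exact Hp|]. psolve.
  - intros a b H' chi' E Hp1 Hp2. injection E as -> ->. exact Hp2.
  - intros a b d H' chi' E Hp. injection E as -> ->. exfalso; eapply HA; eauto.
  - intros a b d H' chi' E Hp. injection E as -> ->. exfalso; eapply HO; eauto.
  - intros a b d H' chi' E Hp1 Hp2. injection E as -> ->. exact Hp2.
Qed.

Lemma impweak_var : forall p e G chi, prv false (Imp (Var p) e :: G) chi -> prv false (e :: G) chi.
Proof. intros; eapply impweak_r; eauto; discriminate. Qed.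
Lemma impweak_imp : forall a b e G chi, prv false (Imp (Imp a b) e :: G) chi -> prv false (e :: G) chi.
Proof. intros; eapply impweak_r; eauto; discriminate. Qed.
Lemma impweak_box : forall a e G chi, prv false (Imp (Box a) e :: G) chi -> prv false (e :: G) chi.
Proof. intros; eapply impweak_r; eauto; discriminate. Qed.

Lemma goal_gen : forall (L : list form) (T : form -> form -> Prop),
  (forall G D p chi', Permutation D (Var p :: G) -> T (Var p) chi' -> prv false (L ++ D) chi') ->
  (forall G a b chi', T (And a b) chi' -> prv false G a -> prv false G b -> prv false (L ++ G) chi') ->
  (forall G a b chi', T (Or a b) chi' -> prv false G a -> prv false (L++G) chi') ->
  (forall G a b chi', T (Or a b) chi' -> prv false G b -> prv false (L++G) chi') ->
  (forall G a b chi', T (Imp a b) chi' -> prv false (a :: G) b -> prv false (L ++ G) chi') ->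
  (forall D a chi', T (Box a) chi' -> prv false (Box a :: map unb D) a -> prv false (L ++ D) chi') ->
  forall D chi, prv false D chi -> forall chi', T chi chi' -> prv false (L ++ D) chi'.
Proof.
  intros L T hId hAnd hOr1 hOr2 hImp hBox.
  induction 1; intros chi' HT.
  - eapply BotL with (G := L ++ G). psolve.
  - eapply hId; eauto.
  - eapply AndL with (G := L ++ G) (a:=a) (b:=b). psolve.
    eapply prv_perm; [apply (IHprv chi' HT)|]. psolve.
  - eapply hAnd; eauto.
  - eapply OrL with (G := L ++ G) (a:=a) (b:=b). psolve.
    eapply prv_perm; [apply (IHprv1 chi' HT)|]. psolve.
    eapply prv_perm; [apply (IHprv2 chi' HT)|]. psolve.
  - eapply hOr1; eauto.
  - eapply hOr2; eauto.
  - eapply PImpL with (G := L ++ G) (p:=p) (a:=a). psolve.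
    eapply prv_perm; [apply (IHprv chi' HT)|]. psolve.
  - eapply hImp; eauto.
  - eapply prv_perm with (D := Imp (Box a) b :: L ++ Phi ++ boxes G). 2:{ psolve. }
    apply BoxImpL'.
    + rewrite map_app, map_unb_pg; auto.
      eapply prv_perm; [apply (weak_app false (map unb L)); exact H1|]. psolve.
    + eapply prv_perm; [apply (IHprv2 chi' HT)|]. psolve.
  - eapply hBox; eauto. eapply prv_perm; [exact H1|]. apply perm_skip.
    symmetry. apply sltr_canon; auto.
  - eapply AndImpL with (G := L ++ G) (a:=a) (b:=b) (c:=c). psolve.
    eapply prv_perm; [apply (IHprv chi' HT)|]. psolve.
  - eapply OrImpL with (G := L ++ G) (a:=a) (b:=b) (c:=c). psolve.
    eapply prv_perm; [apply (IHprv chi' HT)|]. psolve.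
  - eapply ImpImpL with (G := L ++ G) (a:=a) (b:=b) (c:=c). psolve.
    eapply prv_perm; [apply (weak_app false L); exact H0|]. psolve.
    eapply prv_perm; [apply (IHprv2 chi' HT)|]. psolve.
  - discriminate.
Qed.

Lemma impR_inv : forall D a b, prv false D (Imp a b) -> prv false (a :: D) b.
Proof.
  intros D a b H.
  apply (goal_gen [a] (fun chi chi' => chi = Imp a b /\ chi' = b)) with (chi := Imp a b); auto;
    try (intros; match goal with H : _ /\ _ |- _ => destruct H as [E _]; discriminate end).
  intros G a' b' chi' [E ->] Hp. injection E as -> ->. exact Hp.
Qed.

Lemma andR_inv1 : forall D a b, prv false D (And a b) -> prv false D a.
Proof.
  intros D a b H.
  apply (goal_gen [] (fun chi chi' => chi = And a b /\ chi' = a)) with (chi := And a b); auto;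
    try (intros; match goal with H : _ /\ _ |- _ => destruct H as [E _]; discriminate end).
  intros G a' b' chi' [E ->] Hp1 Hp2. injection E as -> ->. exact Hp1.
Qed.

Lemma andR_inv2 : forall D a b, prv false D (And a b) -> prv false D b.
Proof.
  intros D a b H.
  apply (goal_gen [] (fun chi chi' => chi = And a b /\ chi' = b)) with (chi := And a b); auto;
    try (intros; match goal with H : _ /\ _ |- _ => destruct H as [E _]; discriminate end).
  intros G a' b' chi' [E ->] Hp1 Hp2. injection E as -> ->. exact Hp2.
Qed.

Lemma bot_right : forall D chi, prv false D Bot -> prv false D chi.
Proof.
  intros D chi H.
  apply (goal_gen [] (fun c c' => c = Bot)) with (chi := Bot); auto;
    intros; discriminate.
Qed.

Inductive prvh : nat -> list form -> form -> Prop :=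
| hBotL : forall n G D chi, Permutation D (Bot :: G) -> prvh n D chi
| hIdP : forall n G D p, Permutation D (Var p :: G) -> prvh n D (Var p)
| hAndL : forall n G D a b chi, Permutation D (And a b :: G) ->
    prvh n (a :: b :: G) chi -> prvh (S n) D chi
| hAndR : forall n G a b, prvh n G a -> prvh n G b -> prvh (S n) G (And a b)
| hOrL : forall n G D a b chi, Permutation D (Or a b :: G) ->
    prvh n (a :: G) chi -> prvh n (b :: G) chi -> prvh (S n) D chi
| hOrR1 : forall n G a b, prvh n G a -> prvh (S n) G (Or a b)
| hOrR2 : forall n G a b, prvh n G b -> prvh (S n) G (Or a b)
| hPImpL : forall n G D p a chi, Permutation D (Var p :: Imp (Var p) a :: G) ->
    prvh n (Var p :: a :: G) chi -> prvh (S n) D chi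
| hImpR : forall n G a b, prvh n (a :: G) b -> prvh (S n) G (Imp a b)
| hBoxImpL : forall n Hc D a b chi, Permutation D (Imp (Box a) b :: Hc) ->
    prvh n (Box a :: b :: map unb Hc) a -> prvh n (b :: Hc) chi -> prvh (S n) D chi
| hSLtR : forall n D a, prvh n (Box a :: map unb D) a -> prvh (S n) D (Box a)
| hAndImpL : forall n G D a b c d, Permutation D (Imp (And a b) c :: G) ->
    prvh n (Imp a (Imp b c) :: G) d -> prvh (S n) D d
| hOrImpL : forall n G D a b c d, Permutation D (Imp (Or a b) c :: G) ->
    prvh n (Imp a c :: Imp b c :: G) d -> prvh (S n) D d
| hImpImpL : forall n G D a b c d, Permutation D (Imp (Imp a b) c :: G) ->
    prvh n (Imp b c :: G) (Imp a b) -> prvh n (c :: G) d -> prvh (S n) D d.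

Lemma prvh_perm : forall n D chi, prvh n D chi -> forall D', Permutation D D' -> prvh n D' chi.
Proof.
  induction 1; intros D' HP.
  - eapply hBotL. rewrite <- HP; eassumption.
  - eapply hIdP. rewrite <- HP; eassumption.
  - eapply hAndL; [rewrite <- HP; eassumption| eauto].
  - apply hAndR; eauto.
  - eapply hOrL; [rewrite <- HP; eassumption| eauto | eauto].
  - apply hOrR1; eauto.
  - apply hOrR2; eauto.
  - eapply hPImpL; [rewrite <- HP; eassumption| eauto].
  - apply hImpR; eauto.
  - eapply hBoxImpL; [rewrite <- HP; eassumption | eauto | eauto].
  - apply hSLtR; eauto. apply IHprvh. apply perm_skip. apply Permutation_map; auto.
  - eapply hAndImpL; [rewrite <- HP; eassumption| eauto].
  - eapply hOrImpL; [rewrite <- HP; eassumption| eauto].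
  - eapply hImpImpL; [rewrite <- HP; eassumption| eauto | eauto].
Qed.

Lemma prvh_S : forall n D chi, prvh n D chi -> prvh (S n) D chi.
Proof.
  induction 1.
  - eapply hBotL; eauto.
  - eapply hIdP; eauto.
  - eapply hAndL; eauto.
  - apply hAndR; eauto.
  - eapply hOrL; eauto.
  - apply hOrR1; eauto.
  - apply hOrR2; eauto.
  - eapply hPImpL; eauto.
  - apply hImpR; eauto.
  - eapply hBoxImpL; eauto.
  - apply hSLtR; eauto.
  - eapply hAndImpL; eauto.
  - eapply hOrImpL; eauto.
  - eapply hImpImpL; eauto.
Qed.

Lemma prvh_mono : forall n m D chi, n <= m -> prvh n D chi -> prvh m D chi.
Proof. intros n m D chi Hle; induction Hle; intros; auto. apply prvh_S; auto. Qed.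

Lemma prvh_prv : forall n D chi, prvh n D chi -> prv false D chi.
Proof.
  induction 1.
  - eapply BotL; eauto.
  - eapply IdP; eauto.
  - eapply AndL; eauto.
  - apply AndR; eauto.
  - eapply OrL; eauto.
  - apply OrR1; eauto.
  - apply OrR2; eauto.
  - eapply PImpL; eauto.
  - apply ImpR; eauto.
  - eapply prv_perm; [apply BoxImpL'; eauto| symmetry; auto].
  - apply SLtR'; eauto.
  - eapply AndImpL; eauto.
  - eapply OrImpL; eauto.
  - eapply ImpImpL; eauto.
Qed.

Lemma prv_prvh : forall D chi, prv false D chi -> exists n, prvh n D chi.
Proof.
  induction 1.
  - exists 0; eapply hBotL; exact H.
  - exists 0; eapply hIdP; exact H.
  - destruct IHprv as [n Hn]. exists (S n); eapply hAndL; eauto.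
  - destruct IHprv1 as [n Hn]; destruct IHprv2 as [m Hm]. exists (S (max n m)).
    apply hAndR; [apply (prvh_mono n); [lia|exact Hn] | apply (prvh_mono m); [lia|exact Hm]].
  - destruct IHprv1 as [n Hn]; destruct IHprv2 as [m Hm]. exists (S (max n m)).
    eapply hOrL; [exact H | apply (prvh_mono n); [lia|exact Hn] | apply (prvh_mono m); [lia|exact Hm]].
  - destruct IHprv as [n Hn]. exists (S n); apply hOrR1; eauto.
  - destruct IHprv as [n Hn]. exists (S n); apply hOrR2; eauto.
  - destruct IHprv as [n Hn]. exists (S n); eapply hPImpL; eauto.
  - destruct IHprv as [n Hn]. exists (S n); apply hImpR; eauto.
  - destruct IHprv1 as [n Hn]; destruct IHprv2 as [m Hm]. exists (S (max n m)).
    eapply hBoxImpL; [exact H0 | apply (prvh_mono n); [lia|] | apply (prvh_mono m); [lia|exact Hm]].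
    eapply prvh_perm; [exact Hn|]. do 2 apply perm_skip. symmetry.
    rewrite map_unb_pg; auto.
  - destruct IHprv as [n Hn]. exists (S n); apply hSLtR.
    eapply prvh_perm; [exact Hn|]. apply perm_skip. symmetry. apply sltr_canon; auto.
  - destruct IHprv as [n Hn]. exists (S n); eapply hAndImpL; eauto.
  - destruct IHprv as [n Hn]. exists (S n); eapply hOrImpL; eauto.
  - destruct IHprv1 as [n Hn]; destruct IHprv2 as [m Hm]. exists (S (max n m)).
    eapply hImpImpL; [exact H | apply (prvh_mono n); [lia|exact Hn] | apply (prvh_mono m); [lia|exact Hm]].
  - discriminate.
Qed.

Lemma prvh_weak : forall n D chi, prvh n D chi -> forall A, prvh n (A :: D) chi.
Proof.
  induction 1; intro A0.
  - eapply hBotL with (G := A0 :: G). psolve.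
  - eapply hIdP with (G := A0 :: G). psolve.
  - eapply hAndL with (G := A0 :: G) (a:=a) (b:=b). psolve. eapply prvh_perm; [apply (IHprvh A0)|]. psolve.
  - apply hAndR; auto.
  - eapply hOrL with (G := A0 :: G) (a:=a) (b:=b). psolve.
    eapply prvh_perm; [apply (IHprvh1 A0)|]. psolve. eapply prvh_perm; [apply (IHprvh2 A0)|]. psolve.
  - apply hOrR1; auto.
  - apply hOrR2; auto.
  - eapply hPImpL with (G := A0 :: G) (p:=p) (a:=a). psolve. eapply prvh_perm; [apply (IHprvh A0)|]. psolve.
  - apply hImpR. eapply prvh_perm; [apply (IHprvh A0)|]. psolve.
  - eapply hBoxImpL with (Hc := A0 :: Hc) (a:=a) (b:=b). psolve.
    + simpl. eapply prvh_perm; [apply (IHprvh1 (unb A0))|]. psolve.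
    + eapply prvh_perm; [apply (IHprvh2 A0)|]. psolve.
  - apply hSLtR. simpl. eapply prvh_perm; [apply (IHprvh (unb A0))|]. psolve.
  - eapply hAndImpL with (G := A0 :: G) (a:=a) (b:=b) (c:=c). psolve. eapply prvh_perm; [apply (IHprvh A0)|]. psolve.
  - eapply hOrImpL with (G := A0 :: G) (a:=a) (b:=b) (c:=c). psolve. eapply prvh_perm; [apply (IHprvh A0)|]. psolve.
  - eapply hImpImpL with (G := A0 :: G) (a:=a) (b:=b) (c:=c). psolve.
    eapply prvh_perm; [apply (IHprvh1 A0)|]. psolve. eapply prvh_perm; [apply (IHprvh2 A0)|]. psolve.
Qed.

Fixpoint w (A : form) : nat :=
  match A with
  | Var _ => 1 | Bot => 1
  | And a b => w a + w b + 2
  | Or a b => w a + w b + 1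
  | Imp a b => w a + w b + 1
  | Box a => w a + 1
  end.

Lemma w_pos : forall A, 1 <= w A.
Proof. destruct A; simpl; lia. Qed.

Definition Cst (X : form) := forall G E, prv false (X :: X :: G) E -> prv false (X :: G) E.
Definition MPst (d B : form) := forall G E, prv false (Imp d B :: G) d -> prv false (B :: G) E ->
  prv false (Imp d B :: G) E.

Lemma impweak_g : forall x e, (forall Y, w Y < w x + w e -> Cst Y) ->
  forall G chi, prv false (Imp x e :: G) chi -> prv false (e :: G) chi.
Proof.
  induction x; intros e HC G chi H.
  - eapply impweak_var; eauto.
  - eapply impweak_r; eauto; discriminate.
  - apply andImpL_inv in H. apply IHx1 in H.
    + apply IHx2 in H; auto. intros Y HY; apply HC; simpl in *; lia.
    + intros Y HY; apply HC; simpl in *; lia.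
  - apply orImpL_inv in H. apply IHx1 in H.
    + eapply prv_perm in H; [|apply perm_swap]. apply IHx2 in H.
      * apply HC; auto. simpl; pose proof (w_pos x1); pose proof (w_pos x2); lia.
      * intros Y HY; apply HC; simpl in *; lia.
    + intros Y HY; apply HC; simpl in *; lia.
  - eapply impweak_imp; eauto.
  - eapply impweak_box; eauto.
Qed.

Lemma i7 : forall c d e, MPst d e -> forall G chi, prv false (Imp (Imp c d) e :: G) chi ->
  prv false (c :: Imp d e :: G) chi.
Proof.
  intros c d e HMP G chi H.
  apply (repl_gen false (Imp (Imp c d) e) [c; Imp d e]) with (D := Imp (Imp c d) e :: G); auto;
    try (intros; discriminate); try (intros ? ?; discriminate).
  intros a b d' H' chi' E Hp1 Hp2. injection E as -> -> ->.
  apply impR_inv in Hp1.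
  eapply prv_perm with (D := Imp b d' :: a :: H'). 2:{ psolve. }
  apply HMP.
  - eapply prv_perm; [exact Hp1|]. psolve.
  - eapply prv_perm; [apply (weak _ _ _ Hp2 a)|]. psolve.
Qed.

Lemma MP_lvl : forall N, (forall X, w X < N -> Cst X) -> (forall d B, w d + w B < N -> MPst d B) ->
  forall d B, w d + w B = N -> MPst d B.
Proof.
  intros N HC HM d B HN. subst N.
  assert (Hgen : forall n D G E, prvh n D d -> Permutation D (Imp d B :: G) ->
     prv false (B :: G) E -> prv false (Imp d B :: G) E).
  { induction n as [n IHn] using lt_wf_ind.
    intros D0 G0 E Hh HP HP2.
    inversion Hh; subst.
    -
      destruct (np1 _ _ _ _ _ H HP ltac:(discriminate)) as (K & HK1 & HK2).
      eapply BotL with (G := Imp d B :: K). psolve.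
    -
      destruct (np1 _ _ _ _ _ H HP ltac:(discriminate)) as (K & HK1 & HK2).
      eapply PImpL with (G := K) (p := p) (a := B). psolve.
      eapply prv_perm; [exact HP2|]. psolve.
    -
      destruct (np1 _ _ _ _ _ H HP ltac:(discriminate)) as (K & HK1 & HK2).
      assert (P2 : prv false (B :: a :: b :: K) E).
      { assert (Q : prv false (And a b :: B :: K) E) by (eapply prv_perm; [exact HP2|]; psolve).
        apply andL_inv in Q. eapply prv_perm; [exact Q|]. psolve. }
      pose proof (IHn n0 ltac:(lia) _ (a :: b :: K) E H0 ltac:(psolve) P2) as R.
      eapply AndL with (G := Imp d B :: K) (a:=a) (b:=b). psolve.
      eapply prv_perm; [exact R|]. psolve.
    -
      pose proof (prv_perm _ _ _ (prvh_prv _ _ _ H) _ HP) as Pa.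
      pose proof (prv_perm _ _ _ (prvh_prv _ _ _ H0) _ HP) as Pb.
      eapply AndImpL with (G := G0) (a:=a) (b:=b) (c:=B). reflexivity.
      apply (HM a (Imp b B)). simpl; lia.
      + apply andImpL_inv; auto.
      + apply (HM b B). simpl; lia.
        * apply (impweak_g a (Imp b B)). intros Y HY; apply HC; simpl in *; lia.
          apply andImpL_inv; auto.
        * exact HP2.
    -
      destruct (np1 _ _ _ _ _ H HP ltac:(discriminate)) as (K & HK1 & HK2).
      assert (Q : prv false (Or a b :: B :: K) E).
      { eapply prv_perm; [exact HP2|]. psolve. }
      pose proof (IHn n0 ltac:(lia) _ (a :: K) E H0 ltac:(psolve)
         ltac:(eapply prv_perm; [apply (orL_inv1 _ _ _ _ Q)|]; psolve)) as R1.
      pose proof (IHn n0 ltac:(lia) _ (b :: K) E H1 ltac:(psolve)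
         ltac:(eapply prv_perm; [apply (orL_inv2 _ _ _ _ Q)|]; psolve)) as R2.
      eapply OrL with (G := Imp d B :: K) (a:=a) (b:=b). psolve.
      eapply prv_perm; [exact R1|]. psolve.
      eapply prv_perm; [exact R2|]. psolve.
    -
      pose proof (prv_perm _ _ _ (prvh_prv _ _ _ H) _ HP) as Pa.
      eapply OrImpL with (G := G0) (a:=a) (b:=b) (c:=B). reflexivity.
      apply (HM a B). simpl; lia.
      + apply orImpL_inv; auto.
      + eapply prv_perm; [apply (weak _ _ _ HP2 (Imp b B))|]. psolve.
    -
      pose proof (prv_perm _ _ _ (prvh_prv _ _ _ H) _ HP) as Pb.
      eapply OrImpL with (G := G0) (a:=a) (b:=b) (c:=B). reflexivity.
      eapply prv_perm with (D := Imp b B :: Imp a B :: G0). 2:{ psolve. }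
      apply (HM b B). simpl; lia.
      + eapply prv_perm; [apply orImpL_inv; exact Pb|]. psolve.
      + eapply prv_perm; [apply (weak _ _ _ HP2 (Imp a B))|]. psolve.
    -
      destruct (form_eq_dec (Imp d B) (Imp (Var p) a)) as [E1|Hne].
      + injection E1 as -> ->.
        assert (HG : Permutation G0 (Var p :: G)).
        { eapply Permutation_cons_inv. rewrite <- HP, H. apply perm_swap. }
        eapply PImpL with (G := G) (p := p) (a := a). psolve.
        eapply prv_perm; [exact HP2|]. psolve.
      + destruct (np2 _ _ _ _ _ _ H HP ltac:(discriminate) (fun E => Hne (eq_sym E))) as (K & HK1 & HK2).
        assert (Q : prv false (Imp (Var p) a :: B :: Var p :: K) E).
        { eapply prv_perm; [exact HP2|]. psolve. }
        apply impweak_var in Q.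
        pose proof (IHn n0 ltac:(lia) _ (Var p :: a :: K) E H0 ltac:(psolve)
          ltac:(eapply prv_perm; [exact Q|]; psolve)) as R.
        eapply PImpL with (G := Imp d B :: K) (p := p) (a := a). psolve.
        eapply prv_perm; [exact R|]. psolve.
    -
      pose proof (prv_perm _ _ _ (prvh_prv _ _ _ H) (Imp (Imp a b) B :: a :: G0) ltac:(psolve)) as P.
      apply (i7 a b B) in P. 2:{ apply HM; simpl; lia. }
      eapply ImpImpL with (G := G0) (a:=a) (b:=b) (c:=B). reflexivity.
      + apply ImpR. apply (HC a). simpl; lia.
        eapply prv_perm; [exact P|]. psolve.
      + exact HP2.
    -
      destruct (form_eq_dec (Imp d B) (Imp (Box a) b)) as [E1|Hne].
      + injection E1 as -> ->.
        pose proof (perm_head_eq _ _ _ _ H HP) as HG.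
        apply BoxImpL'.
        * eapply prv_perm; [apply (prvh_prv _ _ _ H0)|]. do 2 apply perm_skip.
          apply Permutation_map. symmetry; auto.
        * exact HP2.
      + destruct (np1 _ _ _ _ _ H HP (fun E => Hne (eq_sym E))) as (K & HK1 & HK2).
        assert (Q : prv false (Imp (Box a) b :: B :: K) E).
        { eapply prv_perm; [exact HP2|]. psolve. }
        apply impweak_box in Q.
        pose proof (IHn n0 ltac:(lia) _ (b :: K) E H1 ltac:(psolve)
          ltac:(eapply prv_perm; [exact Q|]; psolve)) as R.
        eapply prv_perm with (D := Imp (Box a) b :: Imp d B :: K). 2:{ psolve. }
        apply BoxImpL'.
        * eapply prv_perm; [apply (prvh_prv _ _ _ H0)|]. 
          apply (Permutation_map unb) in HK2. simpl in *. psolve.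
        * eapply prv_perm; [exact R|]. psolve.
    -
      pose proof (prvh_prv _ _ _ H) as P.
      apply (Permutation_map unb) in HP. simpl in HP.
      apply BoxImpL'.
      + eapply prv_perm in P; [|apply perm_skip; exact HP].
        eapply prv_perm in P; [|apply perm_swap]. apply impweak_box in P.
        eapply prv_perm; [exact P|]. psolve.
      + exact HP2.
    -
      destruct (form_eq_dec (Imp d B) (Imp (And a b) c)) as [E1|Hne].
      + injection E1 as -> ->.
        pose proof (perm_head_eq _ _ _ _ H HP) as HG.
        pose proof (prv_perm _ _ _ (prvh_prv _ _ _ H0) (Imp a (Imp b c) :: G0) ltac:(psolve)) as P.
        eapply AndImpL with (G := G0) (a:=a) (b:=b) (c:=c). reflexivity.
        apply (HM a (Imp b c)). simpl; lia.
        * eapply andR_inv1; eauto.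
        * apply (HM b c). simpl; lia.
          -- apply (impweak_g a (Imp b c)). intros Y HY; apply HC; simpl in *; lia.
             eapply andR_inv2; eauto.
          -- exact HP2.
      + destruct (np1 _ _ _ _ _ H HP (fun E => Hne (eq_sym E))) as (K & HK1 & HK2).
        assert (Q : prv false (Imp (And a b) c :: B :: K) E).
        { eapply prv_perm; [exact HP2|]. psolve. }
        apply andImpL_inv in Q.
        pose proof (IHn n0 ltac:(lia) _ (Imp a (Imp b c) :: K) E H0 ltac:(psolve)
          ltac:(eapply prv_perm; [exact Q|]; psolve)) as R.
        eapply AndImpL with (G := Imp d B :: K) (a:=a) (b:=b) (c:=c). psolve.
        eapply prv_perm; [exact R|]. psolve.
    -
      destruct (form_eq_dec (Imp d B) (Imp (Or a b) c)) as [E1|Hne].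
      + injection E1 as -> ->.
        pose proof (perm_head_eq _ _ _ _ H HP) as HG.
        pose proof (prvh_weak _ _ _ H0 (Imp (Or a b) c)) as Hw.
        pose proof (IHn n0 ltac:(lia) _ (Imp a c :: Imp b c :: G0) E Hw ltac:(psolve)
          ltac:(eapply prv_perm; [apply (weak _ _ _ (weak _ _ _ HP2 (Imp b c)) (Imp a c))|]; psolve)) as R.
        apply orImpL_inv in R. pose proof (w_pos a); pose proof (w_pos b).
        eapply OrImpL with (G := G0) (a:=a) (b:=b) (c:=c). reflexivity.
        assert (R2 : prv false (Imp a c :: Imp b c :: Imp b c :: G0) E).
        { apply (HC (Imp a c)). simpl; lia. eapply prv_perm; [exact R|]. psolve. }
        assert (R3 : prv false (Imp b c :: Imp a c :: G0) E).
        { apply (HC (Imp b c)). simpl; lia. eapply prv_perm; [exact R2|]. psolve. }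
        eapply prv_perm; [exact R3|]. psolve.
      + destruct (np1 _ _ _ _ _ H HP (fun E => Hne (eq_sym E))) as (K & HK1 & HK2).
        assert (Q : prv false (Imp (Or a b) c :: B :: K) E).
        { eapply prv_perm; [exact HP2|]. psolve. }
        apply orImpL_inv in Q.
        pose proof (IHn n0 ltac:(lia) _ (Imp a c :: Imp b c :: K) E H0 ltac:(psolve)
          ltac:(eapply prv_perm; [exact Q|]; psolve)) as R.
        eapply OrImpL with (G := Imp d B :: K) (a:=a) (b:=b) (c:=c). psolve.
        eapply prv_perm; [exact R|]. psolve.
    -
      destruct (form_eq_dec (Imp d B) (Imp (Imp a b) c)) as [E1|Hne].
      + injection E1 as -> ->.
        pose proof (perm_head_eq _ _ _ _ H HP) as HG.
        eapply ImpImpL with (G := G0) (a:=a) (b:=b) (c:=c). reflexivity.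
        * eapply prv_perm; [apply (prvh_prv _ _ _ H0)|]. psolve.
        * exact HP2.
      + destruct (np1 _ _ _ _ _ H HP (fun E => Hne (eq_sym E))) as (K & HK1 & HK2).
        assert (Q : prv false (Imp (Imp a b) c :: B :: K) E).
        { eapply prv_perm; [exact HP2|]. psolve. }
        apply impweak_imp in Q.
        pose proof (IHn n0 ltac:(lia) _ (c :: K) E H1 ltac:(psolve)
          ltac:(eapply prv_perm; [exact Q|]; psolve)) as R.
        eapply ImpImpL with (G := Imp d B :: K) (a:=a) (b:=b) (c:=c). psolve.
        * eapply prv_perm; [apply (prvh_prv _ _ _ H0)|]. psolve.
        * eapply prv_perm; [exact R|]. psolve.
  }
  intros G E H1 H2. destruct (prv_prvh _ _ H1) as [n Hn]. eapply Hgen; eauto.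
Qed.

Lemma cp1 : forall D (Y X : form) H0 G, Permutation D (Y :: H0) -> Permutation D (X :: X :: G) -> Y <> X ->
  exists K, Permutation H0 (X :: X :: K) /\ Permutation G (Y :: K).
Proof.
  intros D Y X H0 G H1 H2 Hne.
  destruct (np1 _ _ _ _ _ H1 H2 Hne) as (K1 & HK1 & HK2).
  destruct (perm_split _ _ _ _ HK1) as [[E _]|[_ (K & HK3 & HK4)]]; [congruence|].
  exists K. split; [rewrite HK2, HK4; auto | auto].
Qed.

Lemma cp2 : forall D (Y Z X : form) H0 G, Permutation D (Y :: Z :: H0) -> Permutation D (X :: X :: G) -> Y <> X -> Z <> X ->
  exists K, Permutation H0 (X :: X :: K) /\ Permutation G (Y :: Z :: K).
Proof.
  intros D Y Z X H0 G H1 H2 Hne1 Hne2.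
  destruct (cp1 _ _ _ _ _ H1 H2 Hne1) as (K1 & HK1 & HK2).
  destruct (cp1 _ _ _ _ _ (Permutation_refl _) HK1 Hne2) as (K & HK3 & HK4).
  exists K. split; auto. rewrite HK2, HK4. auto.
Qed.

Lemma ph2 : forall D (X : form) H0 G, Permutation D (X :: H0) -> Permutation D (X :: X :: G) -> Permutation H0 (X :: G).
Proof. intros. eapply Permutation_cons_inv. rewrite <- H, H1. auto. Qed.

Lemma C_lvl : forall N, (forall X, w X < N -> Cst X) -> (forall d B, w d + w B < N -> MPst d B) ->
  forall X, w X = N -> Cst X.
Proof.
  intros N HC HM X HN. subst N. unfold Cst.
  assert (Hgen : forall D E, prv false D E -> forall G, Permutation D (X :: X :: G) -> prv false (X :: G) E).
  { induction 1; intros G0 HP.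
    - destruct (form_eq_dec Bot X) as [<-|Hne].
      + eapply BotL; reflexivity.
      + destruct (cp1 _ _ _ _ _ H HP Hne) as (K & HK1 & HK2).
        eapply BotL with (G := X :: K). psolve.
    - destruct (form_eq_dec (Var p) X) as [<-|Hne].
      + eapply IdP; reflexivity.
      + destruct (cp1 _ _ _ _ _ H HP Hne) as (K & HK1 & HK2).
        eapply IdP with (G := X :: K). psolve.
    - destruct (form_eq_dec (And a b) X) as [<-|Hne].
      + pose proof (ph2 _ _ _ _ H HP) as HG.
        assert (Q : prv false (And a b :: a :: b :: G0) chi) by (eapply prv_perm; [exact H0|]; psolve).
        apply andL_inv in Q.
        assert (Q2 : prv false (a :: b :: b :: G0) chi).
        { apply (HC a); [simpl; lia|]. eapply prv_perm; [exact Q|]. psolve. }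
        assert (Q3 : prv false (b :: a :: G0) chi).
        { apply (HC b); [simpl; lia|]. eapply prv_perm; [exact Q2|]. psolve. }
        eapply AndL with (G := G0) (a:=a) (b:=b). reflexivity.
        eapply prv_perm; [exact Q3|]. psolve.
      + destruct (cp1 _ _ _ _ _ H HP Hne) as (K & HK1 & HK2).
        eapply AndL with (G := X :: K) (a:=a) (b:=b). psolve.
        eapply prv_perm; [apply (IHprv (a :: b :: K)); psolve|]. psolve.
    - apply AndR; auto.
    - destruct (form_eq_dec (Or a b) X) as [<-|Hne].
      + pose proof (ph2 _ _ _ _ H HP) as HG.
        eapply OrL with (G := G0) (a:=a) (b:=b). reflexivity.
        * apply (HC a); [simpl; lia|]. eapply prv_perm; [apply (orL_inv1 a b (a :: G0))|]. 2: psolve.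
          eapply prv_perm; [exact H0|]. psolve.
        * apply (HC b); [simpl; lia|]. eapply prv_perm; [apply (orL_inv2 a b (b :: G0))|]. 2: psolve.
          eapply prv_perm; [exact H1|]. psolve.
      + destruct (cp1 _ _ _ _ _ H HP Hne) as (K & HK1 & HK2).
        eapply OrL with (G := X :: K) (a:=a) (b:=b). psolve.
        eapply prv_perm; [apply (IHprv1 (a :: K)); psolve|]. psolve.
        eapply prv_perm; [apply (IHprv2 (b :: K)); psolve|]. psolve.
    - apply OrR1; auto.
    - apply OrR2; auto.
    - destruct (form_eq_dec (Var p) X) as [<-|Hne1].
      + assert (HP' : Permutation (Imp (Var p) a :: G) (Var p :: G0)) by (eapply Permutation_cons_inv; rewrite <- H, HP; auto).
        destruct (perm_split _ _ _ _ HP') as [[E _]|[_ (K & HK1 & HK2)]]; [discriminate|].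
        eapply PImpL with (G := K) (p:=p) (a:=a). psolve.
        eapply prv_perm; [apply (IHprv (a :: K)); psolve|]. psolve.
      + destruct (form_eq_dec (Imp (Var p) a) X) as [<-|Hne2].
        * assert (HP' : Permutation (Var p :: G) (Imp (Var p) a :: G0)).
          { eapply Permutation_cons_inv. rewrite <- HP, H. apply perm_swap. }
          destruct (perm_split _ _ _ _ HP') as [[E _]|[_ (K & HK1 & HK2)]]; [discriminate|].
          assert (Q : prv false (Imp (Var p) a :: a :: Var p :: K) chi) by (eapply prv_perm; [exact H0|]; psolve).
          apply impweak_var in Q.
          apply (HC a) in Q; [|simpl; lia].
          eapply PImpL with (G := K) (p:=p) (a:=a). psolve.
          eapply prv_perm; [exact Q|]. psolve.
        * destruct (cp2 _ _ _ _ _ _ H HP Hne1 Hne2) as (K & HK1 & HK2).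
          eapply PImpL with (G := X :: K) (p:=p) (a:=a). psolve.
          eapply prv_perm; [apply (IHprv (Var p :: a :: K)); psolve|]. psolve.
    - apply ImpR. eapply prv_perm; [apply (IHprv (a :: G0)); psolve|]. psolve.
    - destruct (form_eq_dec (Imp (Box a) b) X) as [<-|Hne].
      + pose proof (ph2 _ _ _ _ H0 HP) as HG.
        assert (Hm : Permutation (Phi ++ G) (Imp (Box a) b :: map unb G0)).
        { rewrite <- (map_unb_pg _ _ H). apply (Permutation_map unb) in HG. exact HG. }
        apply BoxImpL'.
        * assert (Q : prv false (Imp (Box a) b :: b :: Box a :: map unb G0) a) by (eapply prv_perm; [exact H1|]; psolve).
          apply impweak_box in Q. apply (HC b) in Q; [|simpl; lia].
          eapply prv_perm; [exact Q|]. psolve.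
        * assert (Q : prv false (Imp (Box a) b :: b :: G0) chi) by (eapply prv_perm; [exact H2|]; psolve).
          apply impweak_box in Q. apply (HC b) in Q; [|simpl; lia]. exact Q.
      + destruct (cp1 _ _ _ _ _ H0 HP Hne) as (K & HK1 & HK2).
        assert (Hm : Permutation (Phi ++ G) (unb X :: unb X :: map unb K)).
        { rewrite <- (map_unb_pg _ _ H). apply (Permutation_map unb) in HK1. exact HK1. }
        eapply prv_perm with (D := Imp (Box a) b :: X :: K). 2:{ psolve. }
        apply BoxImpL'.
        * simpl. destruct (box_or_unb X) as [(h & ->)|EX].
          -- simpl in *. eapply prv_perm; [apply (HC h ltac:(simpl; lia) (Box a :: b :: map unb K)); eapply prv_perm; [exact H1|]; psolve | psolve].
          -- rewrite EX in *. eapply prv_perm; [apply (IHprv1 (Box a :: b :: map unb K)); psolve|]. psolve.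
        * eapply prv_perm; [apply (IHprv2 (b :: K)); psolve|]. psolve.
    - apply SLtR'.
      assert (Hm : Permutation (Phi ++ G) (unb X :: unb X :: map unb G0)).
      { rewrite <- (map_unb_pg _ _ H). apply (Permutation_map unb) in HP.
        apply (Permutation_map unb) in H0. rewrite <- H0. exact HP. }
      simpl. destruct (box_or_unb X) as [(h & ->)|EX].
      + simpl in *. eapply prv_perm; [apply (HC h ltac:(simpl; lia) (Box a :: map unb G0)); eapply prv_perm; [exact H1|]; psolve | psolve].
      + rewrite EX in *. eapply prv_perm; [apply (IHprv (Box a :: map unb G0)); psolve|]. psolve.
    - destruct (form_eq_dec (Imp (And a b) c) X) as [<-|Hne].
      + pose proof (ph2 _ _ _ _ H HP) as HG.
        assert (Q : prv false (Imp (And a b) c :: Imp a (Imp b c) :: G0) d) by (eapply prv_perm; [exact H0|]; psolve).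
        apply andImpL_inv in Q. apply (HC (Imp a (Imp b c))) in Q; [|simpl; lia].
        eapply AndImpL with (G := G0) (a:=a) (b:=b) (c:=c). reflexivity. exact Q.
      + destruct (cp1 _ _ _ _ _ H HP Hne) as (K & HK1 & HK2).
        eapply AndImpL with (G := X :: K) (a:=a) (b:=b) (c:=c). psolve.
        eapply prv_perm; [apply (IHprv (Imp a (Imp b c) :: K)); psolve|]. psolve.
    - destruct (form_eq_dec (Imp (Or a b) c) X) as [<-|Hne].
      + pose proof (ph2 _ _ _ _ H HP) as HG. pose proof (w_pos a); pose proof (w_pos b).
        assert (Q : prv false (Imp (Or a b) c :: Imp a c :: Imp b c :: G0) d) by (eapply prv_perm; [exact H0|]; psolve).
        apply orImpL_inv in Q.
        assert (Q1 : prv false (Imp a c :: Imp a c :: Imp b c :: Imp b c :: G0) d) by (eapply prv_perm; [exact Q|]; psolve).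
        apply (HC (Imp a c)) in Q1; [|simpl; lia].
        assert (Q2 : prv false (Imp b c :: Imp b c :: Imp a c :: G0) d) by (eapply prv_perm; [exact Q1|]; psolve).
        apply (HC (Imp b c)) in Q2; [|simpl; lia].
        eapply OrImpL with (G := G0) (a:=a) (b:=b) (c:=c). reflexivity.
        eapply prv_perm; [exact Q2|]. psolve.
      + destruct (cp1 _ _ _ _ _ H HP Hne) as (K & HK1 & HK2).
        eapply OrImpL with (G := X :: K) (a:=a) (b:=b) (c:=c). psolve.
        eapply prv_perm; [apply (IHprv (Imp a c :: Imp b c :: K)); psolve|]. psolve.
    - destruct (form_eq_dec (Imp (Imp a b) c) X) as [<-|Hne].
      + pose proof (ph2 _ _ _ _ H HP) as HG.
        eapply ImpImpL with (G := G0) (a:=a) (b:=b) (c:=c). reflexivity.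
        * apply ImpR.
          assert (Q : prv false (Imp (Imp a b) c :: a :: Imp b c :: G0) b).
          { apply impR_inv in H0. eapply prv_perm; [exact H0|]. psolve. }
          apply (i7 a b c) in Q; [|apply HM; simpl; lia].
          assert (Q1 : prv false (a :: a :: Imp b c :: Imp b c :: G0) b) by (eapply prv_perm; [exact Q|]; psolve).
          apply (HC a) in Q1; [|simpl; lia].
          assert (Q2 : prv false (Imp b c :: Imp b c :: a :: G0) b) by (eapply prv_perm; [exact Q1|]; psolve).
          apply (HC (Imp b c)) in Q2; [|simpl; lia].
          eapply prv_perm; [exact Q2|]. psolve.
        * assert (Q : prv false (Imp (Imp a b) c :: c :: G0) d) by (eapply prv_perm; [exact H1|]; psolve).
          apply impweak_imp in Q. apply (HC c) in Q; [|simpl; lia]. exact Q.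
      + destruct (cp1 _ _ _ _ _ H HP Hne) as (K & HK1 & HK2).
        eapply ImpImpL with (G := X :: K) (a:=a) (b:=b) (c:=c). psolve.
        eapply prv_perm; [apply (IHprv1 (Imp b c :: K)); psolve|]. psolve.
        eapply prv_perm; [apply (IHprv2 (c :: K)); psolve|]. psolve.
    - discriminate.
  }
  intros G E H. eapply Hgen; eauto.
Qed.

Lemma all_lvl : forall N, (forall X, w X <= N -> Cst X) /\ (forall d B, w d + w B <= N -> MPst d B).
Proof.
  induction N as [N IHN] using lt_wf_ind.
  assert (HC : forall X, w X < N -> Cst X) by (intros X HX; apply (proj1 (IHN (w X) HX)); lia).
  assert (HM : forall d B, w d + w B < N -> MPst d B)
    by (intros d B HX; apply (proj2 (IHN (w d + w B) HX)); lia).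
  split.
  - intros X HX. destruct (Nat.eq_dec (w X) N) as [E|E].
    + apply (C_lvl N); auto.
    + apply HC; lia.
  - intros d B HX. destruct (Nat.eq_dec (w d + w B) N) as [E|E].
    + apply (MP_lvl N); auto.
    + apply HM; lia.
Qed.

Lemma contr : forall X G E, prv false (X :: X :: G) E -> prv false (X :: G) E.
Proof. intros X. exact (proj1 (all_lvl (w X)) X (le_n _)). Qed.

Lemma mp : forall d B G E, prv false (Imp d B :: G) d -> prv false (B :: G) E -> prv false (Imp d B :: G) E.
Proof. intros d B. exact (proj2 (all_lvl (w d + w B)) d B (le_n _)). Qed.

Lemma impweak : forall x e G chi, prv false (Imp x e :: G) chi -> prv false (e :: G) chi.
Proof. intros x e. apply impweak_g. intros Y _. intros G E. apply contr. Qed.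

Lemma i7g : forall c d e G chi, prv false (Imp (Imp c d) e :: G) chi -> prv false (c :: Imp d e :: G) chi.
Proof. intros c d e. apply i7. intros G E. apply mp. Qed.

Definition sm (L : list form) : nat := fold_right (fun A s => 4 ^ w A + s) 0 L.
Definition mu (L : list form) (c : form) : nat := sm L + 4 ^ (S (w c)).

Lemma sm_perm : forall L L', Permutation L L' -> sm L = sm L'.
Proof. induction 1; simpl; lia. Qed.

Lemma mu_perm : forall L L' c, Permutation L L' -> mu L c = mu L' c.
Proof. intros. unfold mu. rewrite (sm_perm _ _ H). auto. Qed.

Lemma w_unb : forall A, w (unb A) <= w A.
Proof. destruct A; simpl; lia. Qed.

Lemma sm_unb : forall L, sm (map unb L) <= sm L.
Proof.
  induction L as [|A L IH]; simpl; auto.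
  pose proof (Nat.pow_le_mono_r 4 _ _ ltac:(lia) (w_unb A)). lia.
Qed.

Lemma pw : forall a b, a < b -> 4 * 4 ^ a <= 4 ^ b /\ 1 <= 4 ^ a.
Proof.
  intros a b H. split.
  - rewrite <- Nat.pow_succ_r'. apply Nat.pow_le_mono_r; lia.
  - apply Nat.neq_0_lt_0. apply Nat.pow_nonzero. lia.
Qed.

Lemma sm_cons : forall A L, sm (A :: L) = 4 ^ w A + sm L.
Proof. reflexivity. Qed.

Ltac mus2 := unfold mu; rewrite ?sm_cons; lia.

Lemma m_andR1 : forall G a b, mu G a < mu G (And a b).
Proof. intros. pose proof (pw (S (w a)) (S (w (And a b))) ltac:(simpl; lia)). mus2. Qed.
Lemma m_andR2 : forall G a b, mu G b < mu G (And a b).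
Proof. intros. pose proof (pw (S (w b)) (S (w (And a b))) ltac:(simpl; lia)). mus2. Qed.
Lemma m_orR1 : forall G a b, mu G a < mu G (Or a b).
Proof. intros. pose proof (w_pos b). pose proof (pw (S (w a)) (S (w (Or a b))) ltac:(simpl; lia)). mus2. Qed.
Lemma m_orR2 : forall G a b, mu G b < mu G (Or a b).
Proof. intros. pose proof (w_pos a). pose proof (pw (S (w b)) (S (w (Or a b))) ltac:(simpl; lia)). mus2. Qed.
Lemma m_impR : forall G a b, mu (a :: G) b < mu G (Imp a b).
Proof.
  intros. pose proof (pw (w a) (S (w (Imp a b))) ltac:(simpl; lia)).
  pose proof (pw (S (w b)) (S (w (Imp a b))) ltac:(simpl; lia)). mus2.
Qed.
Lemma m_sltr : forall G a, mu (Box a :: map unb G) a < mu G (Box a).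
Proof.
  intros. pose proof (sm_unb G). pose proof (pw (w (Box a)) (S (w (Box a))) ltac:(simpl; lia)).
  assert (E : S (w a) = w (Box a)) by (simpl; lia).
  unfold mu. rewrite ?sm_cons. rewrite E. lia.
Qed.
Lemma m_andL : forall K a b c, mu (a :: b :: K) c < mu (And a b :: K) c.
Proof.
  intros. pose proof (pw (w a) (w (And a b)) ltac:(simpl; lia)).
  pose proof (pw (w b) (w (And a b)) ltac:(simpl; lia)). mus2.
Qed.
Lemma m_orL1 : forall K a b c, mu (a :: K) c < mu (Or a b :: K) c.
Proof. intros. pose proof (w_pos b). pose proof (pw (w a) (w (Or a b)) ltac:(simpl; lia)). mus2. Qed.
Lemma m_orL2 : forall K a b c, mu (b :: K) c < mu (Or a b :: K) c.
Proof. intros. pose proof (w_pos a). pose proof (pw (w b) (w (Or a b)) ltac:(simpl; lia)). mus2. Qed.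
Lemma m_pimpL : forall K p e c, mu (Var p :: e :: K) c < mu (Var p :: Imp (Var p) e :: K) c.
Proof. intros. pose proof (pw (w e) (w (Imp (Var p) e)) ltac:(simpl; lia)). mus2. Qed.
Lemma m_andImpL : forall K a b c d, mu (Imp a (Imp b c) :: K) d < mu (Imp (And a b) c :: K) d.
Proof. intros. pose proof (pw (w (Imp a (Imp b c))) (w (Imp (And a b) c)) ltac:(simpl; lia)). mus2. Qed.
Lemma m_orImpL : forall K a b c d, mu (Imp a c :: Imp b c :: K) d < mu (Imp (Or a b) c :: K) d.
Proof.
  intros. pose proof (w_pos a). pose proof (w_pos b).
  pose proof (pw (w (Imp a c)) (w (Imp (Or a b) c)) ltac:(simpl; lia)).
  pose proof (pw (w (Imp b c)) (w (Imp (Or a b) c)) ltac:(simpl; lia)). mus2.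
Qed.
Lemma m_impImpL2 : forall K a b c d, mu (c :: K) d < mu (Imp (Imp a b) c :: K) d.
Proof. intros. pose proof (pw (w c) (w (Imp (Imp a b) c)) ltac:(simpl; lia)). mus2. Qed.
Lemma m_impImpL1 : forall K a b c d, mu (a :: Imp b c :: K) b < mu (Imp (Imp a b) c :: K) d.
Proof.
  intros. pose proof (w_pos c).
  pose proof (pw (w a) (w (Imp (Imp a b) c)) ltac:(simpl; lia)).
  pose proof (pw (w (Imp b c)) (w (Imp (Imp a b) c)) ltac:(simpl; lia)).
  pose proof (pw (S (w b)) (w (Imp (Imp a b) c)) ltac:(simpl; lia)). mus2.
Qed.
Lemma m_boxImpL2 : forall K a b d, mu (b :: K) d < mu (Imp (Box a) b :: K) d.
Proof. intros. pose proof (pw (w b) (w (Imp (Box a) b)) ltac:(simpl; lia)). mus2. Qed.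
Lemma m_boxImpL1 : forall K a b d, mu (Box a :: b :: map unb K) a < mu (Imp (Box a) b :: K) d.
Proof.
  intros. pose proof (sm_unb K). pose proof (w_pos b).
  pose proof (pw (w (Box a)) (w (Imp (Box a) b)) ltac:(simpl; lia)).
  pose proof (pw (w b) (w (Imp (Box a) b)) ltac:(simpl; lia)).
  assert (E : S (w a) = w (Box a)) by (simpl; lia).
  unfold mu. rewrite ?sm_cons. rewrite E. lia.
Qed.

Definition CutSt A := forall D chi, prv false D A -> prv false (A :: D) chi -> prv false D chi.

Ltac mlt HK lem := rewrite (mu_perm _ _ _ HK); apply lem.

Lemma cut_right : forall A D chi,
  (forall B, w B < w A -> CutSt B) ->
  (forall D' chi', mu D' chi' < mu D chi -> prv false D' A -> prv false (A::D') chi' -> prv false D' chi') ->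
  prv false D A ->
  (forall a b, A = Imp a b -> prv false (a :: D) b) ->
  (forall a, A = Box a -> prv false (Box a :: map unb D) a) ->
  (forall a b, A <> And a b) -> (forall a b, A <> Or a b) -> (forall p, A <> Var p) -> A <> Bot ->
  prv false (A :: D) chi -> prv false D chi.
Proof.
  intros A D chi IHw IHm HL LPi LPb HnA HnO HnV HnB HR.
  inversion HR; subst.
  -
    destruct (np1 _ _ _ _ _ H (Permutation_refl (A :: D)) (fun E => HnB (eq_sym E))) as (K & HK1 & HK2).
    eapply BotL; exact HK1.
  -
    destruct (np1 _ _ _ _ _ H (Permutation_refl (A :: D)) (fun E => HnV p (eq_sym E))) as (K & HK1 & HK2).
    eapply IdP; exact HK1.
  -
    destruct (np1 _ _ _ _ _ H (Permutation_refl (A :: D)) (fun E => HnA a b (eq_sym E))) as (K & HK1 & HK2).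
    assert (L1 : prv false (a :: b :: K) A) by (apply andL_inv; eapply prv_perm; eauto).
    assert (R1 : prv false (a :: b :: K) chi).
    { apply IHm; auto. mlt HK1 m_andL. eapply prv_perm; [exact H0|]. psolve. }
    eapply AndL; [exact HK1 | exact R1].
  -
    apply AndR; apply IHm; auto; [apply m_andR1 | apply m_andR2].
  -
    destruct (np1 _ _ _ _ _ H (Permutation_refl (A :: D)) (fun E => HnO a b (eq_sym E))) as (K & HK1 & HK2).
    assert (Q : prv false (Or a b :: K) A) by (eapply prv_perm; eauto).
    eapply OrL; [exact HK1 | |].
    + apply IHm; auto. mlt HK1 m_orL1. apply (orL_inv1 _ _ _ _ Q). eapply prv_perm; [exact H0|]. psolve.
    + apply IHm; auto. mlt HK1 m_orL2. apply (orL_inv2 _ _ _ _ Q). eapply prv_perm; [exact H1|]. psolve.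
  -
    apply OrR1; apply IHm; auto; apply m_orR1.
  -
    apply OrR2; apply IHm; auto; apply m_orR2.
  -
    destruct (form_eq_dec A (Imp (Var p) a)) as [EA|Hne].
    + subst A.
      assert (HD : Permutation D (Var p :: G)) by (eapply Permutation_cons_inv; rewrite H; apply perm_swap).
      assert (Q : prv false (Var p :: Var p :: G) a).
      { eapply prv_perm; [apply (LPi (Var p) a eq_refl)|]. psolve. }
      apply contr in Q.
      apply (IHw a) with (D := D); [simpl; lia | eapply prv_perm; [exact Q|]; psolve | ].
      eapply prv_perm; [exact H0|]. psolve.
    + destruct (np2 _ _ _ _ _ _ H (Permutation_refl (A :: D)) (fun E => HnV p (eq_sym E)) (fun E => Hne (eq_sym E))) as (K & HK1 & HK2).
      assert (L1 : prv false (Var p :: a :: K) A).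
      { assert (Q : prv false (Imp (Var p) a :: Var p :: K) A) by (eapply prv_perm; [exact HL|]; psolve).
        apply impweak_var in Q. eapply prv_perm; [exact Q|]. psolve. }
      eapply PImpL; [exact HK1|].
      apply IHm; auto. mlt HK1 m_pimpL. eapply prv_perm; [exact H0|]. psolve.
  -
    apply ImpR. apply IHm; [apply m_impR | apply weak; auto | eapply prv_perm; [exact H|]; psolve].
  -
    destruct (form_eq_dec A (Imp (Box a) b)) as [EA|Hne].
    + subst A.
      pose proof (perm_head_eq _ _ _ _ H0 (Permutation_refl _)) as HG.
      assert (LP : prv false (Box a :: D) b) by (apply LPi; auto).
      assert (P1 : prv false (b :: Box a :: map unb D) a).
      { eapply prv_perm; [exact H1|]. rewrite <- (map_unb_pg _ _ H).
        apply (Permutation_map unb) in HG. psolve. }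
      assert (S2 : prv false (Box a :: map unb D) b) by (apply (unbox_mid false [Box a]); exact LP).
      assert (S3 : prv false (Box a :: map unb D) a) by (apply (IHw b); [simpl; lia | exact S2 | exact P1]).
      assert (S4 : prv false D (Box a)) by (apply SLtR'; exact S3).
      assert (S5 : prv false D b) by (apply (IHw (Box a)); [simpl; lia | exact S4 | exact LP]).
      apply (IHw b); [simpl; lia | exact S5 |].
      eapply prv_perm; [exact H2|]. apply perm_skip. symmetry; auto.
    + destruct (np1 _ _ _ _ _ H0 (Permutation_refl (A :: D)) (fun E => Hne (eq_sym E))) as (K & HK1 & HK2).
      assert (L2 : prv false (b :: K) A).
      { assert (Q : prv false (Imp (Box a) b :: K) A) by (eapply prv_perm; [exact HL|]; psolve).
        apply impweak_box in Q. exact Q. }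
      assert (R2 : prv false (b :: K) chi).
      { apply IHm; auto. mlt HK1 m_boxImpL2. eapply prv_perm; [exact H2|]. psolve. }
      assert (Hm : Permutation (Phi ++ G) (unb A :: map unb K)).
      { rewrite <- (map_unb_pg _ _ H). apply (Permutation_map unb) in HK2. exact HK2. }
      assert (L1 : prv false (Box a :: b :: map unb K) A).
      { apply weak. apply (unbox_mid false [b]). exact L2. }
      assert (R1 : prv false (Box a :: b :: map unb K) a).
      { apply IHm; auto. mlt HK1 m_boxImpL1.
        destruct (box_or_unb A) as [(a0 & ->)|EA].
        -
          simpl in Hm.
          assert (LB : prv false (Box a0 :: Box a :: b :: map unb K) a0).
          { assert (Q : prv false (Imp (Box a) b :: Box a0 :: map unb K) a0).
            { eapply prv_perm; [apply (LPb a0 eq_refl)|].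
              apply (Permutation_map unb) in HK1. simpl in HK1. psolve. }
            apply impweak_box in Q.
            eapply prv_perm; [apply (weak _ _ _ Q (Box a))|]. psolve. }
          apply (IHw a0); [simpl; lia | exact LB |].
          eapply prv_perm; [apply (weak _ _ _ H1 (Box a0))|]. psolve.
        - rewrite EA in Hm. eapply prv_perm; [exact H1|]. psolve. }
      eapply prv_perm; [apply BoxImpL'; [exact R1 | exact R2]|]. symmetry; exact HK1.
  -
    apply SLtR'.
    assert (Hm : Permutation (Phi ++ G) (unb A :: map unb D)).
    { rewrite <- (map_unb_pg _ _ H). apply (Permutation_map unb) in H0. symmetry. exact H0. }
    apply IHm; [apply m_sltr | |].
    + apply weak. apply (unbox_mid false []). exact HL.
    + destruct (box_or_unb A) as [(a0 & ->)|EA].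
      * simpl in Hm.
        assert (LB : prv false (Box a0 :: Box a :: map unb D) a0).
        { eapply prv_perm; [apply (weak _ _ _ (LPb a0 eq_refl) (Box a))|]. psolve. }
        apply (IHw a0); [simpl; lia | exact LB |].
        eapply prv_perm; [apply (weak _ _ _ H1 (Box a0))|]. psolve.
      * rewrite EA in Hm. eapply prv_perm; [exact H1|]. psolve.
  -
    destruct (form_eq_dec A (Imp (And a b) c)) as [EA|Hne].
    + subst A.
      pose proof (perm_head_eq _ _ _ _ H (Permutation_refl _)) as HG.
      assert (LP : prv false (And a b :: D) c) by (apply LPi; auto).
      apply andL_inv in LP.
      assert (L2 : prv false D (Imp a (Imp b c))).
      { apply ImpR. apply ImpR. eapply prv_perm; [exact LP|]. psolve. }
      apply (IHw (Imp a (Imp b c))); [simpl; lia | exact L2 |].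
      eapply prv_perm; [exact H0|]. apply perm_skip. symmetry; auto.
    + destruct (np1 _ _ _ _ _ H (Permutation_refl (A :: D)) (fun E => Hne (eq_sym E))) as (K & HK1 & HK2).
      assert (L1 : prv false (Imp a (Imp b c) :: K) A) by (apply andImpL_inv; eapply prv_perm; eauto).
      eapply AndImpL; [exact HK1|].
      apply IHm; auto. mlt HK1 m_andImpL. eapply prv_perm; [exact H0|]. psolve.
  -
    destruct (form_eq_dec A (Imp (Or a b) c)) as [EA|Hne].
    + subst A.
      pose proof (perm_head_eq _ _ _ _ H (Permutation_refl _)) as HG.
      assert (LP : prv false (Or a b :: D) c) by (apply LPi; auto).
      assert (La : prv false D (Imp a c)) by (apply ImpR; eapply orL_inv1; eauto).
      assert (Lb : prv false D (Imp b c)) by (apply ImpR; eapply orL_inv2; eauto).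
      pose proof (w_pos a); pose proof (w_pos b).
      apply (IHw (Imp a c)); [simpl; lia | exact La |].
      apply (IHw (Imp b c)); [simpl; lia | apply weak; exact Lb |].
      eapply prv_perm; [exact H0|]. psolve.
    + destruct (np1 _ _ _ _ _ H (Permutation_refl (A :: D)) (fun E => Hne (eq_sym E))) as (K & HK1 & HK2).
      assert (L1 : prv false (Imp a c :: Imp b c :: K) A) by (apply orImpL_inv; eapply prv_perm; eauto).
      eapply OrImpL; [exact HK1|].
      apply IHm; auto. mlt HK1 m_orImpL. eapply prv_perm; [exact H0|]. psolve.
  -
    destruct (form_eq_dec A (Imp (Imp a b) c)) as [EA|Hne].
    + subst A.
      pose proof (perm_head_eq _ _ _ _ H (Permutation_refl _)) as HG.
      assert (LP : prv false (Imp a b :: D) c) by (apply LPi; auto).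
      assert (S1 : prv false D (Imp b c)) by (apply ImpR; eapply impweak; eauto).
      assert (S2 : prv false D (Imp a b)).
      { apply (IHw (Imp b c)); [simpl; lia | exact S1 |].
        eapply prv_perm; [exact H0|]. apply perm_skip. symmetry; auto. }
      assert (S3 : prv false D c) by (apply (IHw (Imp a b)); [simpl; lia | exact S2 | exact LP]).
      apply (IHw c); [simpl; lia | exact S3 |].
      eapply prv_perm; [exact H1|]. apply perm_skip. symmetry; auto.
    + destruct (np1 _ _ _ _ _ H (Permutation_refl (A :: D)) (fun E => Hne (eq_sym E))) as (K & HK1 & HK2).
      assert (Q : prv false (Imp (Imp a b) c :: K) A) by (eapply prv_perm; eauto).
      eapply ImpImpL; [exact HK1| |].
      * apply ImpR. apply IHm; [mlt HK1 m_impImpL1 | apply i7g; exact Q |].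
        apply impR_inv in H0. eapply prv_perm; [exact H0|]. psolve.
      * apply IHm; [mlt HK1 m_impImpL2 | eapply impweak_imp; exact Q |].
        eapply prv_perm; [exact H1|]. psolve.
  - discriminate.
Qed.

Lemma cut_step : forall A, (forall B, w B < w A -> CutSt B) -> CutSt A.
Proof.
  intros A IHw.
  assert (Hm : forall m D chi, mu D chi = m -> prv false D A -> prv false (A :: D) chi -> prv false D chi).
  { induction m as [m IHm0] using lt_wf_ind. intros D chi Hmu HL HR.
    assert (IHm : forall D' chi', mu D' chi' < mu D chi -> prv false D' A -> prv false (A :: D') chi' -> prv false D' chi')
      by (intros D' chi' Hlt; eapply IHm0; [|reflexivity]; lia).
    clear IHm0 Hmu.
    inversion HL; subst.
    - eapply BotL; exact H.
    - assert (Q : prv false (Var p :: Var p :: G) chi) by (eapply prv_perm; [exact HR|]; psolve).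
      apply contr in Q. eapply prv_perm; [exact Q|]. symmetry; exact H.
    - assert (Q : prv false (And a b :: A :: G) chi) by (eapply prv_perm; [exact HR|]; psolve).
      apply andL_inv in Q.
      eapply AndL; [exact H|]. apply IHm; [mlt H m_andL | exact H0 | eapply prv_perm; [exact Q|]; psolve].
    - assert (Q : prv false (a :: b :: D) chi) by (apply andL_inv; exact HR).
      apply (IHw a); [simpl; lia | exact H |].
      apply (IHw b); [simpl; lia | apply weak; exact H0 |].
      eapply prv_perm; [exact Q|]. psolve.
    - assert (Q : prv false (Or a b :: A :: G) chi) by (eapply prv_perm; [exact HR|]; psolve).
      eapply OrL; [exact H| |].
      + apply IHm; [mlt H m_orL1 | exact H0 | eapply prv_perm; [apply (orL_inv1 _ _ _ _ Q)|]; psolve].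
      + apply IHm; [mlt H m_orL2 | exact H1 | eapply prv_perm; [apply (orL_inv2 _ _ _ _ Q)|]; psolve].
    - pose proof (w_pos b). apply (IHw a); [simpl; lia | exact H | eapply orL_inv1; exact HR].
    - pose proof (w_pos a). apply (IHw b); [simpl; lia | exact H | eapply orL_inv2; exact HR].
    - assert (Q : prv false (Imp (Var p) a :: A :: Var p :: G) chi) by (eapply prv_perm; [exact HR|]; psolve).
      apply impweak_var in Q.
      eapply PImpL; [exact H|]. apply IHm; [mlt H m_pimpL | exact H0 | eapply prv_perm; [exact Q|]; psolve].
    - apply (cut_right (Imp a b) D chi); auto; try (intros; discriminate).
      intros a' b' E. injection E as <- <-. exact H.
    - assert (Q : prv false (Imp (Box a) b :: A :: Phi ++ boxes G) chi) by (eapply prv_perm; [exact HR|]; psolve).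
      apply impweak_box in Q.
      eapply BoxImpL; [exact H | exact H0 | exact H1 |].
      apply IHm; [mlt H0 m_boxImpL2 | exact H2 | eapply prv_perm; [exact Q|]; psolve].
    - apply (cut_right (Box a) D chi); auto; try (intros; discriminate).
      intros a' E. injection E as <-. eapply prv_perm; [exact H1|]. apply perm_skip.
      symmetry. apply sltr_canon; auto.
    - assert (Q : prv false (Imp (And a b) c :: A :: G) chi) by (eapply prv_perm; [exact HR|]; psolve).
      apply andImpL_inv in Q.
      eapply AndImpL; [exact H|]. apply IHm; [mlt H m_andImpL | exact H0 | eapply prv_perm; [exact Q|]; psolve].
    - assert (Q : prv false (Imp (Or a b) c :: A :: G) chi) by (eapply prv_perm; [exact HR|]; psolve).
      apply orImpL_inv in Q.
      eapply OrImpL; [exact H|]. apply IHm; [mlt H m_orImpL | exact H0 | eapply prv_perm; [exact Q|]; psolve].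
    - assert (Q : prv false (Imp (Imp a b) c :: A :: G) chi) by (eapply prv_perm; [exact HR|]; psolve).
      apply impweak_imp in Q.
      eapply ImpImpL; [exact H | exact H0 |]. apply IHm; [mlt H m_impImpL2 | exact H1 | eapply prv_perm; [exact Q|]; psolve].
    - discriminate.
  }
  intros D chi HL HR. eapply Hm; eauto.
Qed.

Lemma cut_adm : forall A, CutSt A.
Proof.
  intros A. remember (w A) as n. revert A Heqn.
  induction n as [n IHn] using lt_wf_ind. intros A Hn. subst n.
  apply cut_step. intros B HB. apply (IHn (w B) HB B eq_refl).
Qed.

Lemma elim : forall G chi, prv true G chi -> prv false G chi.
Proof.
  induction 1.
  - eapply BotL; eauto.
  - eapply IdP; eauto.
  - eapply AndL; eauto.
  - apply AndR; auto.
  - eapply OrL; eauto.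
  - apply OrR1; auto.
  - apply OrR2; auto.
  - eapply PImpL; eauto.
  - apply ImpR; auto.
  - eapply BoxImpL; eauto.
  - eapply SLtR; eauto.
  - eapply AndImpL; eauto.
  - eapply OrImpL; eauto.
  - eapply ImpImpL; eauto.
  - eapply cut_adm; eauto.
Qed.


Theorem theorem3 : forall (G : list form) (chi : form),
  G4iSLt_cut_prv G chi -> G4iSLt_prv G chi.
Proof.
  intros G chi H. unfold G4iSLt_cut_prv, G4iSLt_prv in *. apply elim. exact H.
Qed.
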